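(* Let $n\ge1$ be an integer, $x$ an indeterminate, and let $A$ be the $n\times n$ matrix with entries $A_{ij}=(1-x^i)^{n+1-j}(1-x^{i+1})^{n+1-j}x^{i(j-1)}$ for $1\le i,j\le n$. Then $$\det A=(-1)^{\frac{n(n-1)}{2}}x^{\frac{n(n^2-1)}{6}}\prod_{k=1}^{n}(1-x^{2k-1})^{n+1-k}(1-x^{2k})^{n+1-k}.$$ *)

(* Defs.v *)
From mathcomp Require Import all_boot all_order all_algebra.
Set Implicit Arguments. Unset Strict Implicit. Unset Printing Implicit Defensive.
Import GRing.Theory.
Local Open Scope ring_scope.

(* The matrix A of the paper, over integer polynomials {poly int} in x = 'X.
   Paper indices i,j in 1..n correspond to i.+1, j.+1 for i,j : 'I_n. *)
Definition matA (n : nat) : 'M[{poly int}]_n :=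
  \matrix_(i < n, j < n)
    ((1 - 'X^(i.+1)) ^+ (n + 1 - j.+1) * (1 - 'X^(i.+2)) ^+ (n + 1 - j.+1)
      * 'X^(i.+1 * j)).

(* Main.v *)
Require Import Defs.
From mathcomp Require Import all_boot all_order all_algebra.
From mathcomp Require Import ring.
Set Implicit Arguments. Unset Strict Implicit. Unset Printing Implicit Defensive.
Import GRing.Theory.
Local Open Scope ring_scope.

Lemma ord_to_nat (R : comPzRingType) n (f : nat -> nat -> R) :
  \prod_(i < n) \prod_(j < n | (i < j)%N) f i j
  = \prod_(0 <= i < n) \prod_(i.+1 <= j < n) f i j.
Proof.
rewrite big_mkord; apply: eq_bigr => i _.
rewrite -(big_mkord (fun j => (i < j)%N)) (@big_cat_nat _ _ _ i.+1 0 n) ?ltn_ord //=.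
rewrite big_nat_cond big1 ?mul1r; last first.
  by move=> j /andP[/andP[_ ]]; rewrite ltnS leqNgt => /negbTE ->.
rewrite [RHS]big_nat_cond [LHS]big_nat_cond; apply: eq_bigl => j.
by case: (i < j)%N; rewrite ?andbF ?andbT.
Qed.

Lemma count_prod (R : comPzRingType) (a : nat -> R) n :
  \prod_(0 <= i < n) a i * \prod_(0 <= i < n) \prod_(i.+1 <= j < n) (a i * a j)
  = \prod_(0 <= i < n) a i ^+ n.
Proof.
elim: n => [|n IH]; first by rewrite !big_geq // mulr1.
have step : \prod_(0 <= i < n.+1) \prod_(i.+1 <= j < n.+1) (a i * a j)
   = \prod_(0 <= i < n) \prod_(i.+1 <= j < n) (a i * a j) * (\prod_(0<=i<n) a i * a n ^+ n).
  rewrite big_nat_recr //= [X in _ * X]big_geq // mulr1.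
  rewrite (@eq_big_nat _ _ _ 0 n _ (fun i => \prod_(i.+1 <= j < n) (a i * a j) * (a i * a n))); last first.
    by move=> i /andP[_ hi]; rewrite big_nat_recr.
  rewrite big_split /= big_split /= prodr_const_nat subn0 //.
set G := \prod_(0 <= i < n) \prod_(i.+1 <= j < n) (a i * a j).
rewrite step big_nat_recr //= [in RHS]big_nat_recr //=.
rewrite (@eq_big_nat _ _ _ 0 n (fun i => a i ^+ n.+1) (fun i => a i ^+ n * a i)); last by move=> i _; rewrite exprSr.
rewrite big_split /= -IH exprSr.
set P := \prod_(0 <= i < n) a i.
ring.
Qed.
Lemma homVdmF (F : fieldType) n (a b : nat -> F) :
  (forall i, a i != 0) ->
  \det (\matrix_(i < n, j < n) (a i ^+ (n - j) * b i ^+ j)) =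
  \prod_(0 <= i < n) a i * \prod_(0 <= i < n) \prod_(i.+1 <= j < n) (a i * b j - a j * b i).
Proof.
move=> ha.
pose t : 'rV[F]_n := \row_j (b j / a j).
have -> : \matrix_(i < n, j < n) (a i ^+ (n - j) * b i ^+ j)
   = diag_mx (\row_(i<n) a i ^+ n) *m (Vandermonde n t)^T.
  apply/matrixP => i j; rewrite mul_diag_mx !mxE expr_div_n.
  rewrite (expfB _ (ltn_ord j)); have := expf_neq0 j (ha i); move=> h; field; exact: h.
rewrite det_mulmx det_diag det_tr det_Vandermonde.
rewrite [in X in _ * X](eq_bigr (fun i : 'I_n => \prod_(j < n | (i<j)%N) (b j / a j - b i / a i))); last by move=> i _; apply: eq_bigr => j _; rewrite !mxE.
rewrite (@ord_to_nat _ n (fun i j => b j / a j - b i / a i)).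
under eq_bigr do rewrite mxE.
rewrite -(big_mkord xpredT (fun i => a i ^+ n)).
rewrite (@eq_big_nat _ _ _ 0 n (fun i => \prod_(i.+1 <= j < n) (a i * b j - a j * b i))
   (fun i => \prod_(i.+1 <= j < n) ((b j / a j - b i / a i) * (a i * a j)))); last first.
  move=> i _; apply: eq_bigr => j _.
  have := ha i; have := ha j; move=> hj hi; field; by rewrite ?hi ?hj.
rewrite (@eq_big_nat _ _ _ 0 n (fun i => \prod_(i.+1<=j<n) ((b j / a j - b i / a i) * (a i * a j)))
  (fun i => \prod_(i.+1<=j<n) (b j / a j - b i / a i) * \prod_(i.+1<=j<n) (a i * a j))); last by move=> i _; rewrite big_split.
rewrite big_split /= -count_prod.
set P := \prod_(0 <= i < n) a i.
set G := \prod_(0 <= i < n) _.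
set V := \prod_(0 <= i < n) _.
ring.
Qed.
Lemma homVdm (R : idomainType) n (a b : nat -> R) :
  (forall i, a i != 0) ->
  \det (\matrix_(i < n, j < n) (a i ^+ (n - j) * b i ^+ j)) =
  \prod_(0 <= i < n) a i * \prod_(0 <= i < n) \prod_(i.+1 <= j < n) (a i * b j - a j * b i).
Proof.
move=> ha; apply/eqP; rewrite -(@tofrac_eq R); apply/eqP.
rewrite -det_map_mx.
have -> : map_mx (@tofrac R) (\matrix_(i < n, j < n) (a i ^+ (n - j) * b i ^+ j))
   = \matrix_(i < n, j < n) ((tofrac (a i)) ^+ (n - j) * (tofrac (b i)) ^+ j).
  by apply/matrixP => i j; rewrite !mxE rmorphM !rmorphXn.
rewrite (@homVdmF _ n (fun i => tofrac (a i)) (fun i => tofrac (b i))); last by move=> i; rewrite tofrac_eq0.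
rewrite rmorphM !rmorph_prod; congr (_ * _); apply: eq_bigr => i _.
by rewrite rmorph_prod; apply: eq_bigr => j _; rewrite rmorphB !rmorphM.
Qed.
From mathcomp Require Import zify.

Lemma sum_tri n : (2 * \sum_(0 <= i < n) i.+1 = n * n.+1)%N.
Proof.
elim: n => [|n IH]; first by rewrite big_geq.
have H : forall m : nat, (m * m.+1 + 2 * m.+1 = m.+1 * m.+2)%N by move=> m; nia.
rewrite big_nat_recr //= mulnDr IH; exact: H.
Qed.

Lemma E1 n : ((n.+1 * (n.+1 - 1)) %/ 2 = (n * (n - 1)) %/ 2 + n)%N.
Proof.
have -> : (n.+1 * (n.+1 - 1) = n * 2 + n * (n - 1))%N by case: n => // n; nia.
by rewrite divnMDl // addnC.
Qed.

Lemma E2 n : ((n.+1 * (n.+1 ^ 2 - 1)) %/ 6 = (n * (n ^ 2 - 1)) %/ 6 + \sum_(0 <= i < n) i.+1)%N.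
Proof.
have key : forall m S, (2 * S = m * m.+1)%N -> (m.+1 * (m.+1 ^ 2 - 1) = S * 6 + m * (m ^ 2 - 1))%N.
  move=> [|m] S h; first by rewrite /=; lia.
  rewrite !expnS !expn0 !muln1; nia.
by rewrite (key n _ (sum_tri n)) divnMDl // addnC.
Qed.

Definition G (m : nat) : {poly int} := 1 - 'X^m.
Definition aa (i : nat) : {poly int} := G i.+1 * G i.+2.
Definition bb (i : nat) : {poly int} := 'X^(i.+1).
Definition dd (i j : nat) : {poly int} := (-1) * 'X^(i.+1) * (G (j - i) * G (i + j + 3)).

Lemma cdd i j : (i < j)%N -> aa i * bb j - aa j * bb i = dd i j.
Proof.
move=> h; have [d ->] : exists d, j = (i + d)%N by exists (j - i)%N; lia.
rewrite /aa /bb /dd /G addKn.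
have -> : (i + d).+2 = (i + d + 2)%N by lia.
have -> : (i + d).+1 = (i + d + 1)%N by lia.
have -> : i.+2 = (i + 2)%N by lia.
have -> : i.+1 = (i + 1)%N by lia.
have -> : (i + (i + d) + 3)%N = (i + i + d + 3)%N by lia.
rewrite !exprD; ring.
Qed.

Lemma LHS_step n :
  \prod_(0 <= i < n.+1) aa i * \prod_(0 <= i < n.+1) \prod_(i.+1 <= j < n.+1) dd i j
  = (\prod_(0 <= i < n) aa i * \prod_(0 <= i < n) \prod_(i.+1 <= j < n) dd i j)
    * (aa n * \prod_(0 <= i < n) dd i n).
Proof.
rewrite big_nat_recr //= [X in _ * X]big_nat_recr //= [\prod_(n.+1 <= j < n.+1) _]big_geq // mulr1.
rewrite (@eq_big_nat _ _ _ 0 n (fun i => \prod_(i.+1 <= j < n.+1) dd i j)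
   (fun i => \prod_(i.+1 <= j < n) dd i j * dd i n)); last first.
  by move=> i /andP[_ hi]; rewrite big_nat_recr.
rewrite (@big_split _ _ _ _ _ _ (fun i => \prod_(i.+1 <= j < n) dd i j) (fun i => dd i n)) /=.
set A := \prod_(0 <= i < n) aa i.
set B := \prod_(0 <= i < n) \prod_(i.+1 <= j < n) dd i j.
set C := \prod_(0 <= i < n) dd i n.
ring.
Qed.

Lemma M N : \prod_(1 <= k < N.+1) (G (2 * k - 1) * G (2 * k)) = \prod_(1 <= m < (2 * N).+1) G m.
Proof.
elim: N => [|N IH]; first by rewrite !big_geq.
rewrite big_nat_recr //= IH.
have -> : ((2 * N.+1).+1 = ((2 * N).+2).+1)%N by lia.

rewrite [in RHS]big_nat_recr //= [in RHS]big_nat_recr //= -mulrA.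
have -> : (2 * N.+1 - 1 = (2 * N).+1)%N by lia.
by have -> : (2 * N.+1 = (2 * N).+2)%N by lia.
Qed.

Lemma L n (f g : nat -> {poly int}) :
  \prod_(1 <= k < n.+2) (f k ^+ (n.+1 + 1 - k) * g k ^+ (n.+1 + 1 - k))
  = \prod_(1 <= k < n.+1) (f k ^+ (n + 1 - k) * g k ^+ (n + 1 - k))
    * \prod_(1 <= k < n.+2) (f k * g k).
Proof.
rewrite (@eq_big_nat _ _ _ 1 n.+2 _
   (fun k => (f k ^+ (n + 1 - k) * g k ^+ (n + 1 - k)) * (f k * g k))); last first.
  move=> k /andP[_ hk]; have -> : (n.+1 + 1 - k = (n + 1 - k).+1)%N by lia.
  rewrite !exprS; ring.
rewrite big_split /=; congr (_ * _).
by rewrite big_nat_recr //= addn1 subnn !expr0 !mulr1.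
Qed.

Lemma K n : aa n * \prod_(0 <= i < n) dd i n
  = (-1) ^+ n * 'X^(\sum_(0 <= i < n) i.+1) * \prod_(1 <= m < (2 * n).+3) G m.
Proof.
rewrite /dd big_split /= big_split /= big_split /= prodr_const_nat subn0 prodrXr.
rewrite [X in _ * (_ * (X * _))]big_nat_rev /=.
rewrite (@eq_big_nat _ _ _ 0 n (fun i => G (n - (0 + n - i.+1))) (fun i => G i.+1)); last first.
  by move=> i /andP[_ hi]; congr G; lia.
have -> : \prod_(0 <= i < n) G i.+1 = \prod_(1 <= m < n.+1) G m by rewrite big_add1.
have -> : \prod_(0 <= i < n) G (i + n + 3) = \prod_(n.+3 <= m < (2 * n).+3) G m.
  rewrite -(add0n n.+3) big_addn.
  have -> : ((2 * n).+3 - n.+3 = n)%N by lia.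
  by apply: eq_bigr => i _; congr G; lia.
rewrite [in RHS](@big_cat_nat _ _ _ n.+3 1 (2 * n).+3) //; last by lia.
rewrite [in RHS]big_nat_recr //= [in RHS]big_nat_recr //= /aa.
set A := \prod_(1 <= i < n.+1) G i.
set B := \prod_(n.+3 <= m < (2 * n).+3) G m.
ring.
Qed.

Lemma prod_id n :
  \prod_(0 <= i < n) aa i * \prod_(0 <= i < n) \prod_(i.+1 <= j < n) dd i j
  = (-1) ^+ ((n * (n - 1)) %/ 2) * 'X^((n * (n ^ 2 - 1)) %/ 6)
    * \prod_(1 <= k < n.+1) (G (2 * k - 1) ^+ (n + 1 - k) * G (2 * k) ^+ (n + 1 - k)).
Proof.
elim: n => [|n IH]; first by rewrite !big_geq // mul0n div0n !expr0 !mulr1.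
rewrite LHS_step IH K E1 E2 !exprD.
rewrite (L n (fun k => G (2 * k - 1)) (fun k => G (2 * k))) M.
have -> : ((2 * n.+1).+1 = (2 * n).+3)%N by lia.
set A := \prod_(1 <= m < (2 * n).+3) G m.
set B := \prod_(1 <= k < n.+1) _.
ring.
Qed.

Lemma aa_neq0 i : aa i != 0.
Proof.
have hG : forall m, (0 < m)%N -> G m != 0.
  move=> m hm; rewrite /G subr_eq0; apply/eqP => h.
  have := congr1 (fun p : {poly int} => size p) h.
  by rewrite size_polyXn size_poly1 => -[]; lia.
by rewrite /aa mulf_neq0 // hG.
Qed.

Theorem lemma2p8 (n : nat) (hn : (1 <= n)%N) :
  \det (matA n) =
    (-1) ^+ ((n * (n - 1)) %/ 2) * 'X^((n * (n ^ 2 - 1)) %/ 6)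
    * \prod_(1 <= k < n.+1)
        ((1 - 'X^(2 * k - 1)) ^+ (n + 1 - k) * (1 - 'X^(2 * k)) ^+ (n + 1 - k)).
Proof.
have -> : matA n = \matrix_(i < n, j < n) (aa i ^+ (n - j) * bb i ^+ j).
  apply/matrixP => i j; rewrite !mxE /aa /bb /G exprMn -exprM addn1 subSS.
  by rewrite mulnC.
rewrite homVdm; last exact: aa_neq0.
rewrite (@eq_big_nat _ _ _ 0 n (fun i => \prod_(i.+1 <= j < n) (aa i * bb j - aa j * bb i))
   (fun i => \prod_(i.+1 <= j < n) dd i j)); last first.
  by move=> i _; apply: eq_big_nat => j /andP[hj _]; rewrite cdd.
exact: prod_id.
Qed.
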